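(* (1) If $f_1,\dots,f_k\in\mathrm{CN}^n$ and $w_1,\dots,w_k\ge 0$, then $g(x)=\max_{1\le i\le k} w_i f_i(x)$ with $\mathrm{dom}(g)=\bigcap_{i}\mathrm{dom}(f_i)$ belongs to $\mathrm{CN}^n$. (2) If $f\in\mathrm{CN}^n$ and $h:\mathbb{R}\to\mathbb{R}$ is conic and non-decreasing, then $h\circ f\in\mathrm{CN}^n$. (3) If $f\in\mathrm{CN}^m$, $A\in\mathbb{R}^{m\times n}$, $b\in\mathbb{R}^m$, then $g(x)=f(Ax+b)$, with $\mathrm{dom}(g)=\{x: Ax+b\in\mathrm{dom}(f)\}$, belongs to $\mathrm{CN}^n$. (4) If $f_1,f_2\in\mathrm{CN}^n$ and $D=\mathrm{dom}(f_1)\cap\mathrm{dom}(f_2)$, then $g(x)=(f_1(x),f_2(x)):D\to\mathbb{R}^2$ is conic with respect to the lexicographic order on $\mathbb{R}^2$.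
   Context: A function $f:\mathrm{dom}(f)\to \Omega$, with $\mathrm{dom}(f)\subseteq\mathbb{R}^n$ convex and $\Omega$ a totally ordered set (e.g. $\mathbb{R}$, or $\mathbb{R}^2$ with lexicographic order), is conic if for all $y,z\in\mathrm{dom}(f)$ and all $t\ge 0$ with $f(y)\le f(z)$ and $z+t(z-y)\in\mathrm{dom}(f)$, we have $f(z+t(z-y))\ge f(z)$. $\mathrm{CN}^n$ denotes the class of real-valued conic functions with domain a convex subset of $\mathbb{R}^n$. *)

(* Defs.v *)
(* Reals are modelled by an arbitrary realFieldType R
   (the statement is purely order-theoretic/affine, so this is a faithful
   generalisation of R = the real numbers). *)
From HB Require Import structures.
From mathcomp Require Import all_boot all_order all_algebra.
Set Implicit Arguments. Unset Strict Implicit. Unset Printing Implicit Defensive.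
Import Order.TTheory GRing.Theory Num.Theory.
Local Open Scope ring_scope.

Definition convex_set (R : realFieldType) (V : lmodType R) (D : V -> Prop) :=
  forall (x y : V) (t : R), D x -> D y -> 0 <= t -> t <= 1 ->
    D ((1 - t) *: x + t *: y).

(* f : dom(f) -> Omega is conic w.r.t. the total order le on Omega;
   f is a total function on V, only its values on D matter. *)
Definition conic (R : realFieldType) (V : lmodType R) (Omega : Type)
  (le : Omega -> Omega -> Prop) (D : V -> Prop) (f : V -> Omega) :=
  convex_set D /\
  forall (y z : V) (t : R), D y -> D z -> 0 <= t ->
    le (f y) (f z) -> D (z + t *: (z - y)) ->
    le (f z) (f (z + t *: (z - y))).

Definition CN (R : realFieldType) (n : nat) (D : 'cV[R]_n -> Prop)
  (f : 'cV[R]_n -> R) := conic (fun a b : R => a <= b) D f.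

Definition lexle (R : realFieldType) (p q : R * R) : Prop :=
  p.1 < q.1 \/ (p.1 = q.1 /\ p.2 <= q.2).

(* Main.v *)
Require Import Defs.
From HB Require Import structures.
From mathcomp Require Import all_boot all_order all_algebra.
Import Order.TTheory GRing.Theory Num.Theory.
Local Open Scope ring_scope.

Lemma vec_back (R : realFieldType) (V : lmodType R) (y z : V) (t : R) :
  t != 0 -> z + t^-1 *: (z - (z + t *: (z - y))) = y.
Proof.
move=> t0.
rewrite opprD addrA subrr add0r scalerN scalerA mulVf // scale1r opprB.
by rewrite addrC subrK.
Qed.

Lemma conic_rev (R : realFieldType) (V : lmodType R) (D : V -> Prop) (f : V -> R)
  y z t : conic (fun a b : R => a <= b) D f -> D y -> D z -> 0 < t ->
  D (z + t *: (z - y)) -> f y < f z -> f z < f (z + t *: (z - y)).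
Proof.
move=> [_ cf] Dy Dz t0 Dz' lt.
rewrite ltNge; apply/negP => le.
have ti : 0 <= t^-1 by rewrite invr_ge0 ltW.
have := cf (z + t *: (z - y)) z t^-1 Dz' Dz ti le; rewrite vec_back ?gt_eqF //.
move=> /(_ Dy) H.
by move: lt; rewrite ltNge H.
Qed.

Theorem mainTheorem3 (R : realFieldType) :
  (* (1) weighted max of finitely many (k >= 1) conic functions *)
  (forall (n k : nat) (D : 'I_k.+1 -> 'cV[R]_n -> Prop)
          (f : 'I_k.+1 -> 'cV[R]_n -> R) (w : 'I_k.+1 -> R),
     (forall i, CN (D i) (f i)) -> (forall i, 0 <= w i) ->
     CN (fun x => forall i, D i x)
        (fun x => \big[Num.max/(w ord0 * f ord0 x)]_(i < k.+1) (w i * f i x)))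
  /\
  (* (2) composition with a conic non-decreasing h : R -> R *)
  (forall (n : nat) (D : 'cV[R]_n -> Prop) (f : 'cV[R]_n -> R) (h : R -> R),
     CN D f ->
     @conic R R^o R (fun a b : R => a <= b) (fun _ => True) h ->
     {homo h : a b / a <= b} ->
     CN D (fun x => h (f x)))
  /\
  (* (3) precomposition with an affine map *)
  (forall (m n : nat) (D : 'cV[R]_m -> Prop) (f : 'cV[R]_m -> R)
          (A : 'M[R]_(m, n)) (b : 'cV[R]_m),
     CN D f ->
     CN (fun x => D (A *m x + b)) (fun x => f (A *m x + b)))
  /\
  (* (4) the pair (f1, f2) is conic for the lexicographic order on R^2 *)
  (forall (n : nat) (D1 D2 : 'cV[R]_n -> Prop) (f1 f2 : 'cV[R]_n -> R),
     CN D1 f1 -> CN D2 f2 ->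
     conic (@lexle R) (fun x => D1 x /\ D2 x) (fun x => (f1 x, f2 x))).
Proof.
split.
  move=> n k D f w Hf Hw.
  set g := fun x => \big[Num.max/(w ord0 * f ord0 x)]_(i < k.+1) (w i * f i x).
  have gex : forall x, exists j, g x = w j * f j x.
    move=> x; rewrite /g; elim/big_rec: _ => [|i v _ [j ->]]; first by exists ord0.
    case: (leP (w i * f i x) (w j * f j x)) => _; [by exists j | by exists i].
  have gge : forall x i, w i * f i x <= g x.
    by move=> x i; rewrite /g (bigD1 i) //= le_max lexx.
  split.
    move=> x y t Dx Dy t0 t1 i; by case: (Hf i) => cv _; apply: cv.
  move=> y z t Dy Dz t0 le Dz'.
  have [j gj] := gex z; rewrite gj.
  apply: le_trans (gge _ j).
  case: (Hf j) => _ cj.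
  have := Hw j; rewrite le_eqVlt => /orP [/eqP <-|wp].
    by rewrite !mul0r.
  rewrite ler_pM2l //; apply: cj => //.
  by rewrite -(ler_pM2l wp) -gj; apply: le_trans le; apply: gge.
split.
  move=> n D f h [cvx cf] [_ ch] hm; split => // y z t Dy Dz t0 le Dz'.
  case: (leP (f z) (f (z + t *: (z - y)))) => c; first exact: hm.
  have fyz : f z < f y.
    rewrite ltNge; apply/negP => fle.
    by move: c; rewrite ltNge (cf y z t) .
  set a := f y; set bb := f z; set c' := f (z + t *: (z - y)) in c *.
  have ne : bb - a != 0 by rewrite subr_eq0 lt_eqF.
  have := ch a bb ((c' - bb) / (bb - a)) I I.
  have -> : bb + ((c' - bb) / (bb - a)) *: (bb - a : R^o) = c'.
    by rewrite /GRing.scale /= mulrVK ?unitfE // addrC subrK.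
  apply => //.
  by rewrite -mulrNN -invrN !opprB divr_ge0 // subr_ge0 ltW.
split.
  move=> m n D f A b [cvx cf]; split.
    move=> x y t Dx Dy t0 t1.
    have -> : A *m ((1 - t) *: x + t *: y) + b =
              (1 - t) *: (A *m x + b) + t *: (A *m y + b).
      rewrite mulmxDr -!scalemxAr !scalerDr addrACA -scalerDl subrK scale1r.
      by [].
    exact: cvx.
  move=> y z t Dy Dz t0 le Dz'.
  have E : A *m (z + t *: (z - y)) + b =
           (A *m z + b) + t *: ((A *m z + b) - (A *m y + b)).
    rewrite opprD addrACA subrr addr0 mulmxDr -scalemxAr mulmxBr.
    by rewrite addrAC.
  rewrite E; rewrite E in Dz'; exact: cf.
move=> n D1 D2 f1 f2 [c1 h1] [c2 h2]; split.
  move=> x y t [? ?] [? ?] ? ?; split; [exact: c1 | exact: c2].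
move=> y z t [D1y D2y] [D1z D2z] t0 le [D1z' D2z'].
rewrite /lexle /= in le *.
case: le => [lt|[E1 le2]].
  have := h1 y z t D1y D1z t0 (ltW lt) D1z'.
  rewrite le_eqVlt => /orP [/eqP e|]; last by left.
  have := t0; rewrite le_eqVlt => /orP [/eqP t00|tp].
    by right; rewrite -t00 scale0r addr0.
  have := @conic_rev _ _ _ _ y z t (conj c1 h1) D1y D1z tp D1z' lt.
  by rewrite -e ltxx.
have eqle : f1 y <= f1 z by rewrite E1.
have := h1 y z t D1y D1z t0 eqle D1z'.
rewrite le_eqVlt => /orP [/eqP e|]; last by left.
by right; split => //; apply: h2.
Qed.
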